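(* Let $X$ be a Polish space and $\mathbf f=(f_n)_n$ a sequence of continuous real-valued functions on $X$ which is relatively compact in $\mathcal B_1(X)$. Then for every $L\in[\mathbb N]$: $L\in\mathcal L_{\mathbf f}$ if and only if the tree $T_L$ is well-founded.
   Context: $\mathcal B_1(X)$ is the set of real-valued Baire-1 functions on $X$; $(f_n)_n$ is relatively compact in $\mathcal B_1(X)$ if the closure of $\{f_n\}$ in $\mathbb R^X$ (pointwise topology) is compact and contained in $\mathcal B_1(X)$. $[\mathbb N]$ is the set of infinite subsets of $\mathbb N$; $\mathcal L_{\mathbf f}=\{L\in[\mathbb N]:(f_n)_{n\in L}\text{ converges pointwise}\}$. Fix a compatible complete metric on $X$, a countable dense $D\subseteq X$ and an enumeration $(B_n)_n$ of all closed balls with centers in $D$ and rational radii. A finite sequence $w=(l_0,\dots,l_k)\in\mathbb N^{<\mathbb N}$ is acceptable if $B_{l_0}\supseteq\dots\supseteq B_{l_k}$ and $\mathrm{diam}(B_{l_i})\le\frac1{i+1}$ for all $i$; the empty sequence is acceptable. $\mathrm{Fin}$ is the set of finite subsets of $\mathbb N$, $\mathrm{Fin}(L)$ those contained in $L$; $F<G$ means $\max F<\min G$. A tree on $\mathbb N\times\mathrm{Fin}\times\mathbb N$ is identified with a set of triples $(s,t,w)$ of finite sequences of equal length, closed under taking initial segments of equal length; it is well-founded if it has no infinite branch. For $d\in\mathbb N$ and $L\in[\mathbb N]$, $T^d_L$ is the set of $(s,t,w)$ with $|s|=|t|=|w|=k$ such that $s=(n_0<\dots<n_{k-1})$ with $n_i\in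 L$, $t=(F_0<\dots<F_{k-1})$ with $F_i\in\mathrm{Fin}(L)$, $w=(l_0,\dots,l_{k-1})$ acceptable, and for every $i<k$ and every $z\in B_{l_i}$ there is $m_i\in F_i$ with $|f_{n_i}(z)-f_{m_i}(z)|>\frac1{d+1}$. Then $T_L$ consists of the empty triple together with all $(d^\frown s',\{d\}^\frown t',d^\frown w')$ with $d\in\mathbb N$ and $(s',t',w')\in T^d_L$. *)

(* Defs.v *)
From Stdlib Require Import Reals QArith List.
Open Scope R_scope.

(* ---------- metric space structure (Polish space with a fixed compatible
   complete metric d and a countable dense set D) ---------- *)

Definition is_metric {X : Type} (d : X -> X -> R) : Prop :=
  (forall x y, 0 <= d x y) /\
  (forall x y, d x y = 0 <-> x = y) /\
  (forall x y, d x y = d y x) /\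
  (forall x y z, d x z <= d x y + d y z).

Definition cauchy {X : Type} (d : X -> X -> R) (u : nat -> X) : Prop :=
  forall eps, eps > 0 -> exists N, forall m n, (N <= m)%nat -> (N <= n)%nat ->
    d (u m) (u n) < eps.

Definition converges_to {X : Type} (d : X -> X -> R) (u : nat -> X) (x : X) : Prop :=
  forall eps, eps > 0 -> exists N, forall n, (N <= n)%nat -> d (u n) x < eps.

Definition complete {X : Type} (d : X -> X -> R) : Prop :=
  forall u, cauchy d u -> exists x, converges_to d u x.

Definition dense_seq {X : Type} (d : X -> X -> R) (D : nat -> X) : Prop :=
  forall x eps, eps > 0 -> exists k, d x (D k) < eps.

Definition continuous_on_metric {X : Type} (d : X -> X -> R) (g : X -> R) : Prop :=
  forall x eps, eps > 0 -> exists delta, delta > 0 /\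
    forall y, d x y < delta -> Rabs (g y - g x) < eps.

Definition cball {X : Type} (d : X -> X -> R) (c : X) (r : R) (z : X) : Prop :=
  d c z <= r.

Definition ball_enumeration {X : Type} (d : X -> X -> R) (D : nat -> X)
  (B : nat -> X -> Prop) : Prop :=
  (forall n, exists k (q : Q), (0 < q)%Q /\ forall z, B n z <-> cball d (D k) (Q2R q) z) /\
  (forall k (q : Q), (0 < q)%Q -> exists n, forall z, B n z <-> cball d (D k) (Q2R q) z).

Definition baire1 {X : Type} (d : X -> X -> R) (g : X -> R) : Prop :=
  exists gs : nat -> X -> R, (forall n, continuous_on_metric d (gs n)) /\
    forall x, Un_cv (fun n => gs n x) (g x).

(* basic neighbourhood of g in R^X (pointwise/product topology) *)
Definition pw_nbhd {X : Type} (g : X -> R) (xs : list X) (eps : R) (h : X -> R) : Prop :=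
  forall x, In x xs -> Rabs (h x - g x) < eps.

Definition pw_open {X : Type} (U : (X -> R) -> Prop) : Prop :=
  forall g, U g -> exists xs eps, eps > 0 /\ forall h, pw_nbhd g xs eps h -> U h.

Definition pw_closure {X : Type} (A : (X -> R) -> Prop) (g : X -> R) : Prop :=
  forall xs eps, eps > 0 -> exists h, A h /\ pw_nbhd g xs eps h.

Definition pw_compact {X : Type} (K : (X -> R) -> Prop) : Prop :=
  forall (I : Type) (U : I -> (X -> R) -> Prop),
    (forall i, pw_open (U i)) ->
    (forall g, K g -> exists i, U i g) ->
    exists is : list I, forall g, K g -> exists i, In i is /\ U i g.

Definition range_seq {X : Type} (f : nat -> X -> R) (h : X -> R) : Prop :=
  exists n, h = f n.

Definition rel_compact_B1 {X : Type} (d : X -> X -> R) (f : nat -> X -> R) : Prop :=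
  pw_compact (pw_closure (range_seq f)) /\
  (forall g, pw_closure (range_seq f) g -> baire1 d g).

Definition infinite_set (L : nat -> Prop) : Prop :=
  forall N, exists n, (N <= n)%nat /\ L n.

Definition converges_along {X : Type} (f : nat -> X -> R) (L : nat -> Prop) : Prop :=
  forall x, exists l, forall eps, eps > 0 -> exists N, forall n,
    L n -> (N <= n)%nat -> Rabs (f n x - l) < eps.

(* Finite subsets of N are represented by lists (only membership matters). *)

Definition acceptable {X : Type} (d : X -> X -> R) (B : nat -> X -> Prop)
  (w : list nat) : Prop :=
  (forall i, (S i < length w)%nat ->
     forall z, B (nth (S i) w O) z -> B (nth i w O) z) /\
  (forall i, (i < length w)%nat ->
     forall y z, B (nth i w O) y -> B (nth i w O) z -> d y z <= / INR (S i)).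

Definition Td {X : Type} (d : X -> X -> R) (B : nat -> X -> Prop)
  (f : nat -> X -> R) (L : nat -> Prop) (dd : nat)
  (s : list nat) (t : list (list nat)) (w : list nat) : Prop :=
  length s = length w /\ length t = length w /\
  (forall i j, (i < j)%nat -> (j < length s)%nat -> (nth i s O < nth j s O)%nat) /\
  (forall i, (i < length s)%nat -> L (nth i s O)) /\
  (forall i j, (i < j)%nat -> (j < length t)%nat ->
     forall a b, In a (nth i t nil) -> In b (nth j t nil) -> (a < b)%nat) /\
  (forall i, (i < length t)%nat -> forall a, In a (nth i t nil) -> L a) /\
  acceptable d B w /\
  (forall i, (i < length w)%nat -> forall z, B (nth i w O) z ->
     exists m, In m (nth i t nil) /\
       Rabs (f (nth i s O) z - f m z) > / INR (S dd)).

Definition TL {X : Type} (d : X -> X -> R) (B : nat -> X -> Prop)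
  (f : nat -> X -> R) (L : nat -> Prop)
  (s : list nat) (t : list (list nat)) (w : list nat) : Prop :=
  (s = nil /\ t = nil /\ w = nil) \/
  exists dd s' t' w', s = dd :: s' /\ t = (dd :: nil) :: t' /\ w = dd :: w' /\
    Td d B f L dd s' t' w'.

Definition prefix {A : Type} (u : nat -> A) (k : nat) : list A :=
  map u (seq 0 k).

Definition well_founded_tree
  (T : list nat -> list (list nat) -> list nat -> Prop) : Prop :=
  ~ exists (sg : nat -> nat) (tau : nat -> list nat) (om : nat -> nat),
      forall k, T (prefix sg k) (prefix tau k) (prefix om k).

(* Main.v *)
Require Import Defs.
From Stdlib Require Import Reals QArith Qreals List Lia Lra Classical ClassicalEpsilon.
Open Scope R_scope.

Lemma prefix_S {A} (u : nat -> A) k : prefix u (S k) = u 0%nat :: prefix (fun i => u (S i)) k.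
Proof. unfold prefix. simpl. rewrite <- seq_shift, map_map. reflexivity. Qed.

Lemma prefix_len {A} (u:nat->A) k : length (prefix u k) = k.
Proof. unfold prefix. now rewrite length_map, length_seq. Qed.

Lemma nth_prefix {A} (u:nat->A) k i dflt : (i < k)%nat -> nth i (prefix u k) dflt = u i.
Proof. intros H. unfold prefix.
 rewrite nth_indep with (d' := u 0%nat) by (rewrite length_map, length_seq; lia).
 rewrite map_nth, seq_nth by lia. reflexivity. Qed.

Lemma Q2R0 : Q2R 0 = 0. Proof. unfold Q2R; simpl; ring. Qed.

Lemma small_rat (e : R) : 0 < e -> exists q : Q, (0 < q)%Q /\ 0 < Q2R q /\ Q2R q <= e.
Proof.
 intros He. destruct (archimed_cor1 e He) as [N [HN HN0]].
 destruct N as [|N']; [lia|].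
 exists (1 # Pos.of_succ_nat N').
 assert (E : Q2R (1 # Pos.of_succ_nat N') = / INR (S N')).
 { unfold Q2R. rewrite INR_IZR_INZ. simpl. ring. }
 rewrite E. split; [unfold Qlt; simpl; lia|].
 split; [apply Rinv_0_lt_compat, lt_0_INR; lia | lra].
Qed.

Lemma le_eps a r : (forall eps, eps > 0 -> a <= r + eps) -> a <= r.
Proof. intros H. destruct (Rle_dec a r) as [h|h]; auto.
 specialize (H ((a - r)/2)). lra. Qed.

Lemma abs_gt x a : Rabs x > a -> x > a \/ x < - a.
Proof. unfold Rabs; destruct (Rcase_abs x); lra. Qed.

Lemma gt_abs x a : x > a \/ x < - a -> Rabs x > a.
Proof. unfold Rabs; destruct (Rcase_abs x); lra. Qed.

Lemma ball_nonempty {X} (d : X -> X -> R) D B (Hmet : is_metric d)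
  (HB : ball_enumeration d D B) n : exists z, B n z.
Proof.
 destruct (proj1 HB n) as [k [q [Hq Hz]]]. exists (D k). apply Hz. unfold cball.
 destruct Hmet as [_ [H2 _]]. rewrite (proj2 (H2 (D k) (D k)) eq_refl).
 apply Qlt_Rlt in Hq. rewrite Q2R0 in Hq. lra.
Qed.

Lemma ball_closed {X} (d : X -> X -> R) D B (Hmet : is_metric d)
  (HB : ball_enumeration d D B) n (u : nat -> X) z N0 :
  converges_to d u z -> (forall j, (N0 <= j)%nat -> B n (u j)) -> B n z.
Proof.
 intros Hc Hu. destruct (proj1 HB n) as [k [q [_ Hz]]]. apply Hz. unfold cball.
 apply le_eps. intros eps He. destruct (Hc eps He) as [N HN].
 specialize (HN (max N N0) ltac:(lia)).
 pose proof (proj1 (Hz (u (max N N0))) (Hu (max N N0) ltac:(lia))) as Bj. unfold cball in Bj.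
 destruct Hmet as [_ [_ [_ H4]]]. pose proof (H4 (D k) (u (max N N0)) z). lra.
Qed.
Lemma dir1 {X} (d : X -> X -> R) (Hmet : is_metric d) (Hcompl : complete d) D
  B (HB : ball_enumeration d D B) (f : nat -> X -> R) L :
  converges_along f L -> well_founded_tree (TL d B f L).
Proof.
 intros Hconv [sg [tau [om H]]].
 set (sg' := fun i => sg (S i)). set (tau' := fun i => tau (S i)). set (om' := fun i => om (S i)).
 set (dl := / INR (S (sg 0%nat))).
 assert (Hdl : dl > 0) by (apply Rinv_0_lt_compat, lt_0_INR; lia).
 assert (T : forall k, Td d B f L (sg 0%nat) (prefix sg' k) (prefix tau' k) (prefix om' k)).
 { intro k. specialize (H (S k)). rewrite !prefix_S in H.
   destruct H as [[H1 _]|[dd [s' [t' [w' [E1 [E2 [E3 HT]]]]]]]]; [discriminate|].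
   injection E1; injection E2; injection E3; intros; subst. match goal with Hq : sg 0%nat = _ |- _ => rewrite Hq end; exact HT. }
 assert (F1 : forall i j, (i < j)%nat -> (sg' i < sg' j)%nat).
 { intros i j Hij. destruct (T (S j)) as [_ [_ [Hs _]]].
   specialize (Hs i j Hij). rewrite prefix_len, !nth_prefix in Hs by lia. apply Hs; lia. }
 assert (F2 : forall i, L (sg' i)).
 { intros i. destruct (T (S i)) as [_ [_ [_ [HLs _]]]].
   specialize (HLs i). rewrite prefix_len, !nth_prefix in HLs by lia. apply HLs; lia. }
 assert (F3 : forall i j, (i < j)%nat -> forall a b, In a (tau' i) -> In b (tau' j) -> (a < b)%nat).
 { intros i j Hij. destruct (T (S j)) as [_ [_ [_ [_ [Ht _]]]]].
   specialize (Ht i j Hij). rewrite prefix_len, !nth_prefix in Ht by lia. apply Ht; lia. }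
 assert (F4 : forall i a, In a (tau' i) -> L a).
 { intros i. destruct (T (S i)) as [_ [_ [_ [_ [_ [HLt _]]]]]].
   specialize (HLt i). rewrite prefix_len, !nth_prefix in HLt by lia. apply HLt; lia. }
 assert (F5 : forall i z, B (om' (S i)) z -> B (om' i) z).
 { intros i. destruct (T (S (S i))) as [_ [_ [_ [_ [_ [_ [[Hn _] _]]]]]]].
   specialize (Hn i). rewrite prefix_len, !nth_prefix in Hn by lia. apply Hn; lia. }
 assert (F6 : forall i y z, B (om' i) y -> B (om' i) z -> d y z <= / INR (S i)).
 { intros i. destruct (T (S i)) as [_ [_ [_ [_ [_ [_ [[_ Hd] _]]]]]]].
   specialize (Hd i). rewrite prefix_len, !nth_prefix in Hd by lia. apply Hd; lia. }
 assert (F7 : forall i z, B (om' i) z -> exists m, In m (tau' i) /\ Rabs (f (sg' i) z - f m z) > dl).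
 { intros i. destruct (T (S i)) as [_ [_ [_ [_ [_ [_ [_ Hf]]]]]]].
   specialize (Hf i). rewrite prefix_len, !nth_prefix in Hf by lia. apply Hf; lia. }
 assert (Nest : forall i j, (i <= j)%nat -> forall z, B (om' j) z -> B (om' i) z).
 { intros i j Hij. induction Hij; auto. }
 assert (Hx : forall i, exists z, B (om' i) z) by (intro; eapply ball_nonempty; eauto).
 set (xs := fun i => proj1_sig (constructive_indefinite_description _ (Hx i))).
 assert (Hxs : forall i, B (om' i) (xs i)) by (intro i; exact (proj2_sig (constructive_indefinite_description _ (Hx i)))).
 assert (Hcau : cauchy d xs).
 { intros eps He. destruct (archimed_cor1 eps He) as [N [HN HN0]]. exists N.
   intros m n Hm Hn. eapply Rle_lt_trans; [apply (F6 N); [apply (Nest N m Hm); apply Hxs | apply (Nest N n Hn); apply Hxs]|].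
   eapply Rle_lt_trans; [|exact HN]. apply Rinv_le_contravar; [apply lt_0_INR; lia| apply le_INR; lia]. }
 destruct (Hcompl xs Hcau) as [z Hz].
 assert (Bz : forall i, B (om' i) z).
 { intro i. apply (ball_closed d D B Hmet HB (om' i) xs z i Hz). intros j Hj. apply (Nest i j Hj). apply Hxs. }
 assert (G1 : forall i, (i <= sg' i)%nat).
 { induction i; [lia|]. pose proof (F1 i (S i) ltac:(lia)). lia. }
 assert (G2 : forall i a, In a (tau' i) -> (i <= a)%nat).
 { induction i; intros a Ha; [lia|]. destruct (F7 i z (Bz i)) as [b [Hb _]].
   pose proof (IHi b Hb). pose proof (F3 i (S i) ltac:(lia) b a Hb Ha). lia. }
 destruct (Hconv z) as [l Hl]. destruct (Hl (dl/2) ltac:(lra)) as [N HN].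
 destruct (F7 N z (Bz N)) as [m [Hm Hfm]].
 pose proof (HN (sg' N) (F2 N) (G1 N)) as A1.
 pose proof (HN m (F4 N m Hm) (G2 N m Hm)) as A2.
 apply Rabs_def2 in A1. apply Rabs_def2 in A2. apply abs_gt in Hfm. lra.
Qed.
Definition spec {X} (d : X -> X -> R) (B : nat -> X -> Prop) (f : nat -> X -> R)
  (L : nat -> Prop) (x : X) (dl : R) (i N : nat) (rho : R) (p : nat * nat * nat * R) : Prop :=
  let n := fst (fst (fst p)) in let m := snd (fst (fst p)) in
  let l := snd (fst p) in let r := snd p in
  (N <= n)%nat /\ (N <= m)%nat /\ L n /\ L m /\ r > 0 /\
  (forall y, d x y < r -> B l y) /\ (forall y, B l y -> d x y < rho) /\
  (forall y z, B l y -> B l z -> d y z <= / INR (S i)) /\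
  (forall z, B l z -> Rabs (f n z - f m z) > dl).

Lemma step {X} (d : X -> X -> R) (Hmet : is_metric d) D (HD : dense_seq d D)
  B (HB : ball_enumeration d D B) (f : nat -> X -> R)
  (Hcont : forall n, continuous_on_metric d (f n)) L x dl
  (P : forall N, exists n m, (N <= n)%nat /\ (N <= m)%nat /\ L n /\ L m /\
        Rabs (f n x - f m x) > dl) :
  forall i N rho, rho > 0 -> exists p, spec d B f L x dl i N rho p.
Proof.
 intros i N rho Hrho. destruct (P N) as [n [m [Hn [Hm [Ln [Lm Hnm]]]]]].
 set (a := Rabs (f n x - f m x) - dl).
 assert (Ha : a > 0) by (unfold a; lra).
 destruct (Hcont n x (a/3) ltac:(lra)) as [d1 [Hd1 H1]].
 destruct (Hcont m x (a/3) ltac:(lra)) as [d2 [Hd2 H2]].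
 assert (Hi : / INR (S i) > 0) by (apply Rinv_0_lt_compat, lt_0_INR; lia).
 set (m1 := Rmin (Rmin rho d1) (Rmin d2 (/ INR (S i)))).
 assert (M1 : m1 <= rho /\ m1 <= d1 /\ m1 <= d2 /\ m1 <= / INR (S i) /\ m1 > 0).
 { unfold m1. pose proof (Rmin_l rho d1). pose proof (Rmin_r rho d1).
   pose proof (Rmin_l d2 (/ INR (S i))). pose proof (Rmin_r d2 (/ INR (S i))).
   pose proof (Rmin_l (Rmin rho d1) (Rmin d2 (/ INR (S i)))).
   pose proof (Rmin_r (Rmin rho d1) (Rmin d2 (/ INR (S i)))).
   repeat split; try lra. apply Rmin_glb_lt; apply Rmin_glb_lt; lra. }
 destruct (small_rat (m1/3) ltac:(lra)) as [q [Hq [Hr0 Hr]]].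
 set (r := Q2R q) in *.
 destruct (HD x (r/2) ltac:(lra)) as [k Hk].
 destruct (proj2 HB k q Hq) as [l Hl]. fold r in Hl.
 destruct Hmet as [Hpos [Hzero [Hsym Htri]]].
 exists (n, m, l, r/2). unfold spec; cbn [fst snd].
 repeat split; auto; try lra.
 - intros y Hy. apply Hl. unfold cball. pose proof (Htri (D k) x y). rewrite (Hsym (D k) x) in H. lra.
 - intros y Hy. apply Hl in Hy. unfold cball in Hy. pose proof (Htri x (D k) y). lra.
 - intros y z Hy Hz. apply Hl in Hy. apply Hl in Hz. unfold cball in Hy, Hz.
   pose proof (Htri y (D k) z). rewrite (Hsym y (D k)) in H. lra.
 - intros z Hz. apply Hl in Hz. unfold cball in Hz. pose proof (Htri x (D k) z).
   assert (A1 := H1 z ltac:(lra)). assert (A2 := H2 z ltac:(lra)).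
   apply Rabs_def2 in A1. apply Rabs_def2 in A2.
   apply gt_abs. unfold a in *.
   assert (Hv: (f n x - f m x >= 0 /\ Rabs (f n x - f m x) = f n x - f m x) \/
               (f n x - f m x < 0 /\ Rabs (f n x - f m x) = - (f n x - f m x)))
     by (unfold Rabs; destruct Rcase_abs; [right|left]; split; lra).
   destruct Hv as [[Hv1 Hv2]|[Hv1 Hv2]]; rewrite Hv2 in *; [left|right]; lra.
Qed.
Fixpoint iterS {A} (g : nat -> A -> A) (a0 : A) (i : nat) : A :=
  match i with O => a0 | S j => g (S j) (iterS g a0 j) end.

Lemma cauchy_lim (f : nat -> R) (L : nat -> Prop) (HL : infinite_set L) :
  (forall eps, eps > 0 -> exists N, forall n m, L n -> L m -> (N <= n)%nat -> (N <= m)%nat ->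
     Rabs (f n - f m) < eps) ->
  exists l, forall eps, eps > 0 -> exists N, forall n, L n -> (N <= n)%nat -> Rabs (f n - l) < eps.
Proof.
 intros Q.
 set (phi := fun N => proj1_sig (constructive_indefinite_description _ (HL N))).
 assert (Hphi : forall N, (N <= phi N)%nat /\ L (phi N))
   by (intro N; exact (proj2_sig (constructive_indefinite_description _ (HL N)))).
 assert (Hc : Cauchy_crit (fun k => f (phi k))).
 { intros eps He. destruct (Q eps He) as [N HN]. exists N. intros n m Hn Hm.
   unfold R_dist. destruct (Hphi n); destruct (Hphi m). apply HN; auto; lia. }
 destruct (R_complete _ Hc) as [l Hl]. exists l. intros eps He.
 destruct (Q (eps/2) ltac:(lra)) as [N1 HN1]. destruct (Hl (eps/2) ltac:(lra)) as [N2 HN2].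
 exists (max N1 N2). intros n Ln Hn.
 destruct (Hphi (max N1 N2)) as [P1 P2].
 specialize (HN1 n (phi (max N1 N2)) Ln P2 ltac:(lia) ltac:(lia)).
 specialize (HN2 (max N1 N2) ltac:(lia)). unfold R_dist in HN2.
 apply Rabs_def2 in HN1. apply Rabs_def2 in HN2. apply Rabs_def1; lra.
Qed.

Lemma dir2 {X} (d : X -> X -> R) (Hmet : is_metric d) D (HD : dense_seq d D)
  B (HB : ball_enumeration d D B) (f : nat -> X -> R)
  (Hcont : forall n, continuous_on_metric d (f n)) L (HL : infinite_set L) :
  well_founded_tree (TL d B f L) -> converges_along f L.
Proof.
 intros WF x.
 destruct (classic (forall eps, eps > 0 -> exists N, forall n m, L n -> L m -> (N <= n)%nat ->
    (N <= m)%nat -> Rabs (f n x - f m x) < eps)) as [Q|NQ].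
 { exact (cauchy_lim (fun n => f n x) L HL Q). }
 exfalso.
 assert (E : exists eps, eps > 0 /\ forall N, exists n m, (N <= n)%nat /\ (N <= m)%nat /\
           L n /\ L m /\ Rabs (f n x - f m x) >= eps).
 { apply NNPP; intro C. apply NQ. intros eps He. apply NNPP; intro C2. apply C.
   exists eps. split; auto. intros N. apply NNPP; intro C3. apply C2. exists N.
   intros n m Ln Lm Hn Hm. apply Rnot_le_lt. intro C4. apply C3. exists n, m.
   repeat split; auto. lra. }
 destruct E as [eps [He HP]].
 destruct (archimed_cor1 eps He) as [Nd [HNd HNd0]].
 destruct Nd as [|dd]; [lia|].
 set (dl := / INR (S dd)).
 assert (P : forall N, exists n m, (N <= n)%nat /\ (N <= m)%nat /\ L n /\ L m /\
        Rabs (f n x - f m x) > dl).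
 { intro N. destruct (HP N) as [n [m [h1 [h2 [h3 [h4 h5]]]]]]. exists n, m.
   repeat split; auto. unfold dl. lra. }
 assert (Hs : forall i N rho, exists p, rho > 0 -> spec d B f L x dl i N rho p).
 { intros i N rho. destruct (Rlt_dec 0 rho) as [h|h].
   - destruct (step d Hmet D HD B HB f Hcont L x dl P i N rho h) as [p Hp]. exists p; auto.
   - exists (O, O, O, 0). intro; lra. }
 set (sf := fun i N rho => proj1_sig (constructive_indefinite_description _ (Hs i N rho))).
 assert (Hsf : forall i N rho, rho > 0 -> spec d B f L x dl i N rho (sf i N rho))
   by (intros i N rho; exact (proj2_sig (constructive_indefinite_description _ (Hs i N rho)))).
 set (g := fun i (p : nat * nat * nat * R) =>
            sf i (S (max (fst (fst (fst p))) (snd (fst (fst p))))) (snd p)).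
 set (st := iterS g (sf O O 1)).
 set (nf := fun i => fst (fst (fst (st i)))).
 set (mf := fun i => snd (fst (fst (st i)))).
 set (lf := fun i => snd (fst (st i))).
 set (rf := fun i => snd (st i)).
 assert (Inv0 : spec d B f L x dl O O 1 (st O)) by (apply Hsf; lra).
 assert (InvS : forall i, rf i > 0 ->
           spec d B f L x dl (S i) (S (max (nf i) (mf i))) (rf i) (st (S i))).
 { intros i h. apply Hsf. exact h. }
 assert (Pos : forall i, rf i > 0).
 { induction i. - apply Inv0. - apply (InvS i IHi). }
 assert (Inv : forall i, exists N rho, spec d B f L x dl i N rho (st i)).
 { intros [|i]. - exists O, 1. exact Inv0. - eexists; eexists; apply (InvS i (Pos i)). }
 assert (Ln : forall i, L (nf i)) by (intro i; destruct (Inv i) as [? [? Hi]]; apply Hi).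
 assert (Lm : forall i, L (mf i)) by (intro i; destruct (Inv i) as [? [? Hi]]; apply Hi).
 assert (Int : forall i y, d x y < rf i -> B (lf i) y)
   by (intro i; destruct (Inv i) as [? [? Hi]]; apply Hi).
 assert (Dm : forall i y z, B (lf i) y -> B (lf i) z -> d y z <= / INR (S i))
   by (intro i; destruct (Inv i) as [? [? Hi]]; apply Hi).
 assert (Ts : forall i z, B (lf i) z -> Rabs (f (nf i) z - f (mf i) z) > dl)
   by (intro i; destruct (Inv i) as [? [? Hi]]; apply Hi).
 assert (Nst : forall i z, B (lf (S i)) z -> B (lf i) z).
 { intros i z Hz. apply Int. apply (InvS i (Pos i)). exact Hz. }
 assert (Nsn : forall i, (nf i < nf (S i))%nat)
   by (intro i; destruct (InvS i (Pos i)) as [h _]; change (S (max (nf i) (mf i)) <= nf (S i))%nat in h; lia).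
 assert (Nsm : forall i, (mf i < mf (S i))%nat)
   by (intro i; destruct (InvS i (Pos i)) as [_ [h _]]; change (S (max (nf i) (mf i)) <= mf (S i))%nat in h; lia).
 assert (Mn : forall i j, (i < j)%nat -> (nf i < nf j)%nat).
 { intros i j Hij. induction Hij. apply Nsn. pose proof (Nsn m). lia. }
 assert (Mm : forall i j, (i < j)%nat -> (mf i < mf j)%nat).
 { intros i j Hij. induction Hij. apply Nsm. pose proof (Nsm m). lia. }
 apply WF.
 exists (fun k => match k with O => dd | S i => nf i end).
 exists (fun k => match k with O => dd :: nil | S i => mf i :: nil end).
 exists (fun k => match k with O => dd | S i => lf i end).
 intros [|k]. { left. repeat split; reflexivity. }
 right. exists dd, (prefix nf k), (prefix (fun i => mf i :: nil) k), (prefix lf k).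
 rewrite !prefix_S. split; [reflexivity|]. split; [reflexivity|]. split; [reflexivity|].
 unfold Td. rewrite !prefix_len. repeat split.
 - intros i j Hij Hj. rewrite !nth_prefix by lia. apply Mn; auto.
 - intros i Hi. rewrite nth_prefix by lia. apply Ln.
 - intros i j Hij Hj a b Ha Hb. rewrite !nth_prefix in Ha, Hb by lia.
   destruct Ha as [<-|[]]. destruct Hb as [<-|[]]. apply Mm; auto.
 - intros i Hi a Ha. rewrite nth_prefix in Ha by lia. destruct Ha as [<-|[]]. apply Lm.
 - intros i Hi z. rewrite prefix_len in Hi. rewrite !nth_prefix by lia. apply Nst.
 - intros i Hi y z. rewrite prefix_len in Hi. rewrite !nth_prefix by lia. apply Dm.
 - intros i Hi z Hz. rewrite nth_prefix in Hz by lia. rewrite !nth_prefix by lia. exists (mf i). split.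
   + left; reflexivity.
   + apply Ts; auto.
Qed.

Theorem lemma5p10 (X : Type) (d : X -> X -> R) (Hmet : is_metric d)
  (Hcompl : complete d) (D : nat -> X) (HD : dense_seq d D)
  (B : nat -> X -> Prop) (HB : ball_enumeration d D B)
  (f : nat -> X -> R) (Hcont : forall n, continuous_on_metric d (f n))
  (Hrc : rel_compact_B1 d f)
  (L : nat -> Prop) (HL : infinite_set L) :
  converges_along f L <-> well_founded_tree (TL d B f L).
Proof.
  split.
  - apply (dir1 d Hmet Hcompl D B HB f L).
  - apply (dir2 d Hmet D HD B HB f Hcont L HL).
Qed.
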